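(* Let $\mathcal{W}_a$ be a finite set of assignment vectors in $\{0,1\}^n$, each with exactly $n_t$ ones (and $n_c=n-n_t\ge 1$ zeros, $n_t\ge 1$), and let $W^{\mathrm{obs}}\in\mathcal{W}_a$ be the observed assignment with observed outcomes $Y_i$ (so $Y_i=Y_i(1)$ if $W^{\mathrm{obs}}_i=1$ and $Y_i=Y_i(0)$ if $W^{\mathrm{obs}}_i=0$). For $\theta\in\mathbb{R}$ define the imputed outcomes under $H_0^\theta: Y_i(1)-Y_i(0)=\theta$ for all $i$ by $\widetilde Y_i(1)=Y_i,\ \widetilde Y_i(0)=Y_i-\theta$ if $W^{\mathrm{obs}}_i=1$ and $\widetilde Y_i(0)=Y_i,\ \widetilde Y_i(1)=Y_i+\theta$ if $W^{\mathrm{obs}}_i=0$, and for $w\in\mathcal{W}_a$ let $\widehat\tau(\mathbf{Y}^{\mathrm{imp}}_\theta,w)=n_t^{-1}\sum_{i:w_i=1}\widetilde Y_i(1)-n_c^{-1}\sum_{i:w_i=0}\widetilde Y_i(0)$. Let $p(\theta)=|\mathcal{W}_a|^{-1}\sum_{w\in\mathcal{W}_a}I\{\widehat\tau(\mathbf{Y}^{\mathrm{imp}}_\theta,w)\ge \widehat\tau(\mathbf{Y}^{\mathrm{imp}}_\theta,W^{\mathrm{obs}})\}$ and $\theta_l=\sup\{\theta:p(\theta)\le\alpha\}$ for a fixed $\alpha\in(0,1)$ (with $\sup\emptyset=-\infty$). Then: (a) for every $W^b\in\mathcal{W}_a$ with $W^b\ne W^{\mathrm{obs}}$, the equation $\widehat\tau(\mathbf{Y}^{\mathrm{imp}}_\theta,W^b)=\widehat\tau(\mathbf{Y}^{\mathrm{imp}}_\theta,W^{\mathrm{obs}})$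 in $\theta$ has the unique solution $$\theta_b=\frac{\sum_{i:W^{\mathrm{obs}}_i=1,W^b_i=0}Y_i(1)-\sum_{i:W^{\mathrm{obs}}_i=0,W^b_i=1}Y_i(0)}{\sum_{i=1}^n I\{W^{\mathrm{obs}}_i=1,W^b_i=0\}};$$ (b) setting $\theta_b=-\infty$ for $W^b=W^{\mathrm{obs}}$ and letting $\theta_{(1)}\le\cdots\le\theta_{(|\mathcal{W}_a|)}$ be the increasingly ordered values of $\theta_b$ over $W^b\in\mathcal{W}_a$, we have $\theta_l=\theta_{(\lfloor\alpha|\mathcal{W}_a|\rfloor+1)}$.
   Context: Potential outcomes framework: units $i=1,\dots,n$ have fixed potential outcomes $Y_i(1),Y_i(0)$; an assignment $W\in\{0,1\}^n$ has $W_i=1$ for treatment. $I\{\cdot\}$ denotes the indicator function and $\lfloor\cdot\rfloor$ the floor function. *)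

(* Defs.v *)
From HB Require Import structures.
From mathcomp Require Import all_boot all_order all_algebra.
From mathcomp Require Import boolp classical_sets reals constructive_ereal ereal.
Set Implicit Arguments. Unset Strict Implicit. Unset Printing Implicit Defensive.
Import Order.TTheory GRing.Theory Num.Theory.
Local Open Scope ring_scope.
Local Open Scope classical_set_scope.

(* An assignment vector W in {0,1}^n: W i = true means unit i is treated. *)

Definition n_ones (n : nat) (w : {ffun 'I_n -> bool}) : nat := #|[set i | w i]|.

Definition Yobs (R : realType) (n : nat) (Y1 Y0 : 'I_n -> R)
  (Wobs : {ffun 'I_n -> bool}) (i : 'I_n) : R :=
  if Wobs i then Y1 i else Y0 i.

Definition Yimp1 (R : realType) (n : nat) (Y : 'I_n -> R)
  (Wobs : {ffun 'I_n -> bool}) (theta : R) (i : 'I_n) : R :=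
  if Wobs i then Y i else Y i + theta.
Definition Yimp0 (R : realType) (n : nat) (Y : 'I_n -> R)
  (Wobs : {ffun 'I_n -> bool}) (theta : R) (i : 'I_n) : R :=
  if Wobs i then Y i - theta else Y i.

Definition tau_hat (R : realType) (n nt : nat) (Y : 'I_n -> R)
  (Wobs : {ffun 'I_n -> bool}) (theta : R) (w : {ffun 'I_n -> bool}) : R :=
  (nt%:R)^-1 * (\sum_(i | w i) Yimp1 Y Wobs theta i)
  - ((n - nt)%:R)^-1 * (\sum_(i | ~~ w i) Yimp0 Y Wobs theta i).

Definition pval (R : realType) (n nt : nat) (Y : 'I_n -> R)
  (Wobs : {ffun 'I_n -> bool}) (Wa : {set {ffun 'I_n -> bool}}) (theta : R) : R :=
  #|[set w in Wa | tau_hat nt Y Wobs theta Wobs <= tau_hat nt Y Wobs theta w]|%:R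
  / #|Wa|%:R.

(* theta_l = sup {theta : p(theta) <= alpha} in the extended reals
   (ereal_sup of the empty set is -oo) *)
Definition theta_l (R : realType) (n nt : nat) (Y : 'I_n -> R)
  (Wobs : {ffun 'I_n -> bool}) (Wa : {set {ffun 'I_n -> bool}}) (alpha : R)
  : \bar R :=
  ereal_sup [set theta%:E | theta in [set theta : R | pval nt Y Wobs Wa theta <= alpha]].

Definition theta_b (R : realType) (n : nat) (Y1 Y0 : 'I_n -> R)
  (Wobs Wb : {ffun 'I_n -> bool}) : R :=
  ((\sum_(i | Wobs i && ~~ Wb i) Y1 i) - (\sum_(i | ~~ Wobs i && Wb i) Y0 i))
  / (\sum_i ((Wobs i && ~~ Wb i) : nat)%:R).

Definition theta_b_ext (R : realType) (n : nat) (Y1 Y0 : 'I_n -> R)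
  (Wobs Wb : {ffun 'I_n -> bool}) : \bar R :=
  if Wb == Wobs then -oo%E else (theta_b Y1 Y0 Wobs Wb)%:E.

(* theta_(k+1): the (k+1)-th smallest (0-based index k) of the theta_b, Wb in Wa,
   counted with multiplicity *)
Definition theta_order (R : realType) (n : nat) (Y1 Y0 : 'I_n -> R)
  (Wobs : {ffun 'I_n -> bool}) (Wa : {set {ffun 'I_n -> bool}}) (k : nat)
  : \bar R :=
  nth -oo%E (sort (fun x y : \bar R => (x <= y)%E)
                  [seq theta_b_ext Y1 Y0 Wobs w | w <- enum Wa]) k.

(* Main.v *)
Require Import Defs.
From HB Require Import structures.
From mathcomp Require Import all_boot all_order all_algebra.
From mathcomp Require Import boolp classical_sets reals constructive_ereal ereal.
From mathcomp Require Import ring lra.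
Import Order.TTheory GRing.Theory Num.Theory.
Local Open Scope ring_scope.

Lemma tau_sum (R : realType) (n nt : nat) (Y : 'I_n -> R) O theta w :
  tau_hat nt Y O theta w = \sum_i ((nt%:R)^-1 * (if w i then Yimp1 Y O theta i else 0)
     - ((n-nt)%:R)^-1 * (if ~~ w i then Yimp0 Y O theta i else 0)).
Proof. by rewrite /tau_hat sumrB -!mulr_sumr -!big_mkcond. Qed.

Lemma n_ones_sum n (w : {ffun 'I_n -> bool}) : n_ones w = (\sum_i (w i : nat))%N.
Proof.
rewrite /n_ones -sum1_card big_mkcond /=. apply: eq_bigr => i _. rewrite /in_mem /= /in_set /mkset asboolb. by case: (w i).
Qed.

Lemma count_eq (R : realType) n nt (w O : {ffun 'I_n -> bool}) :
  n_ones w = nt -> n_ones O = nt ->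
  \sum_i (((w i && ~~ O i) : nat)%:R : R) = \sum_i ((O i && ~~ w i) : nat)%:R.
Proof.
move=> hw hO; rewrite -!natr_sum; congr (_%:R).
have : (\sum_i (w i : nat) + \sum_i ((O i && ~~ w i) : nat) =
        \sum_i (O i : nat) + \sum_i ((w i && ~~ O i) : nat))%N.
  rewrite -!big_split /=; apply: eq_bigr => i _; by case: (w i); case: (O i).
rewrite -!n_ones_sum hw hO => /eqP; rewrite eqn_add2l => /eqP ->. by [].
Qed.

Lemma tau_diff (R : realType) n nt (Y1 Y0 : 'I_n -> R) (O w : {ffun 'I_n -> bool}) theta :
  n_ones w = nt -> n_ones O = nt ->
  tau_hat nt (Yobs Y1 Y0 O) O theta w - tau_hat nt (Yobs Y1 Y0 O) O theta O
  = ((nt%:R)^-1 + ((n-nt)%:R)^-1) *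
    ((\sum_i (((O i && ~~ w i) : nat)%:R : R)) * theta
     - ((\sum_(i | O i && ~~ w i) Y1 i) - (\sum_(i | ~~ O i && w i) Y0 i))).
Proof.
move=> hw hO.
set ti := (nt%:R)^-1 : R; set tc := ((n-nt)%:R)^-1 : R.
rewrite !tau_sum -sumrB.
transitivity (\sum_i ((ti + tc) * ((((O i && ~~ w i) : nat)%:R : R) * theta
     - ((if O i && ~~ w i then Y1 i else 0) - (if ~~ O i && w i then Y0 i else 0)))
     + theta * ti * ((((w i && ~~ O i) : nat)%:R : R) - ((O i && ~~ w i) : nat)%:R))).
  apply: eq_bigr => i _; rewrite /Yimp1 /Yimp0 /Yobs.
  by case: (w i); case: (O i) => /=; rewrite /ti /tc; ring.
rewrite big_split /= -!mulr_sumr sumrB -mulr_suml sumrB -!big_mkcond.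
rewrite sumrB (@count_eq R n nt w O hw hO) subrr mulr0 addr0. by [].
Qed.
Lemma sorted_count (R : realType) (s : seq (\bar R)) (k : nat) (t : \bar R) :
  sorted (fun x y : \bar R => (x <= y)%E) s -> (k < size s)%N ->
  (seq.count (fun x => (x <= t)%E) s <= k)%N = (t < nth -oo%E s k)%E.
Proof.
move=> hs hk.
have hmono : forall i j, (i < size s)%N -> (j < size s)%N -> (i <= j)%N ->
    (nth -oo%E s i <= nth -oo%E s j)%E.
  move=> i j hi hj hij; exact: (le_sorted_leq_nth (-oo%E) hs).
rewrite -{1}(cat_take_drop k s) count_cat.
case: (ltP t (nth -oo%E s k)) => ht.
  have -> : seq.count (fun x => (x <= t)%E) (drop k s) = 0%N.
    apply/eqP; rewrite -leqn0 leqNgt -has_count; apply/negP => /(has_nthP -oo%E).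
    move=> [i]; rewrite size_drop nth_drop => hi.
    have : (nth -oo%E s k <= nth -oo%E s (k + i))%E.
      apply: hmono => //; [| exact: leq_addr]; by rewrite -ltn_subRL.
    move=> h1 h2; move: (le_trans h1 h2); by rewrite leNgt ht.
  rewrite addn0; apply: (leq_trans (count_size _ _)); rewrite size_take; case: ifP => [_ //|/negP h]; exfalso; apply: h; exact: hk.
apply/negbTE; rewrite -ltnNge -count_cat cat_take_drop.
have hall : all (fun x => (x <= t)%E) (take k.+1 s).
  apply/(all_nthP -oo%E) => i; rewrite size_takel // => hi; rewrite nth_take //.
  apply: le_trans ht; apply: hmono => //.
  exact: leq_trans hi hk.
have : (k.+1 <= seq.count (fun x => (x <= t)%E) s)%N.
  rewrite -(cat_take_drop k.+1 s) count_cat.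
  move: hall; rewrite all_count => /eqP ->; rewrite size_takel //.
  exact: leq_addr.
by [].
Qed.

Lemma m_pos (R : realType) n nt (O w : {ffun 'I_n -> bool}) :
  n_ones w = nt -> n_ones O = nt -> w != O ->
  0 < \sum_i (((O i && ~~ w i) : nat)%:R : R).
Proof.
move=> hw hO hne; rewrite lt_def sumr_ge0 ?andbT; last by move=> i _; exact: ler0n.
apply/eqP => h0; move/negP: hne; apply; apply/eqP/ffunP => i.
have h1 := psumr_eq0P (fun i _ => ler0n R _) h0.
have h2 := psumr_eq0P (fun i _ => ler0n R _) (etrans (@count_eq R n nt w O hw hO) h0).
move: (h1 i isT) (h2 i isT); case: (w i); case: (O i) => //= /eqP h /eqP h'; move: h h'; by rewrite ?pnatr_eq0 ?eqxx // => _.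
Qed.

Lemma sup_lt (R : realType) (t : \bar R) : t != +oo%E ->
  ereal_sup [set x%:E | x in [set x : R | (x%:E < t)%E]] = t.
Proof.
case: t => [r| |] // _.
  apply/le_anti/andP; split.
    apply: ge_ereal_sup => y [x hx <-]; exact: ltW.
  rewrite leNgt; apply/negP => hlt.
  have ub := @ereal_sup_ubound R [set x%:E | x in [set x : R | (x%:E < r%:E)%E]].
  move: hlt; case E : (ereal_sup _) => [m| |].
  - rewrite lte_fin => hm.
    have : (((m + r) / 2)%:E <= m%:E)%E.
      rewrite -E; apply: ub; exists ((m + r) / 2) => //=; rewrite lte_fin; lra.
    rewrite lee_fin; lra.
  - by rewrite ltNge leey.
  - move=> _.
    have : ((r - 1)%:E <= -oo)%E.
      rewrite -E; apply: ub; exists (r - 1) => //=; rewrite lte_fin; lra.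
    by rewrite leeNy_eq.
apply/eqP; rewrite -leeNy_eq; apply: ge_ereal_sup => y [x hx <-].
by move: hx; rewrite /= ltNge leNye.
Qed.

Lemma card_count (T: finType) (A : {set T}) (P : pred T) :
  #|[set w in A | P w]| = seq.count P (enum A).
Proof. rewrite -sum1_count big_enum_cond -sum1_card. apply: eq_bigl => x. by rewrite inE. Qed.

Theorem theorem1 (R : realType) (n nt : nat) (Y1 Y0 : 'I_n -> R)
  (Wa : {set {ffun 'I_n -> bool}}) (Wobs : {ffun 'I_n -> bool}) (alpha : R) :
  (1 <= nt)%N -> (1 <= n - nt)%N ->
  (forall w, w \in Wa -> n_ones w = nt) ->
  Wobs \in Wa ->
  0 < alpha < 1 ->
  (forall Wb, Wb \in Wa -> Wb != Wobs -> forall theta : R,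
     tau_hat nt (Yobs Y1 Y0 Wobs) Wobs theta Wb
       = tau_hat nt (Yobs Y1 Y0 Wobs) Wobs theta Wobs
     <-> theta = theta_b Y1 Y0 Wobs Wb)
  /\ theta_l nt (Yobs Y1 Y0 Wobs) Wobs Wa alpha
     = theta_order Y1 Y0 Wobs Wa `|Num.floor (alpha * #|Wa|%:R)|%N.
Proof.
move=> hnt hnc hWa hO /andP[a0 a1].
have hOn := hWa _ hO.
set c : R := (nt%:R)^-1 + ((n-nt)%:R)^-1.
have c0 : 0 < c by rewrite addr_gt0 // invr_gt0 ltr0n.
have hdiff : forall w, w \in Wa -> w != Wobs -> forall theta,
    tau_hat nt (Yobs Y1 Y0 Wobs) Wobs theta w - tau_hat nt (Yobs Y1 Y0 Wobs) Wobs theta Wobs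
    = c * (\sum_i (((Wobs i && ~~ w i) : nat)%:R : R)) * (theta - theta_b Y1 Y0 Wobs w)
    /\ 0 < \sum_i (((Wobs i && ~~ w i) : nat)%:R : R).
  move=> w hw hne theta; have hwn := hWa _ hw.
  have mp := @m_pos R n nt Wobs w hwn hOn hne.
  split => //.
  rewrite (@tau_diff R n nt Y1 Y0 Wobs w theta hwn hOn) /theta_b -mulrA; congr (_ * _).
  by rewrite mulrBr mulrC [_ * (_ / _)]mulrC divfK // gt_eqF.
split.
  move=> Wb hb hne theta; have [hd mp] := hdiff Wb hb hne theta.
  split.
    move=> h; have : tau_hat nt (Yobs Y1 Y0 Wobs) Wobs theta Wb
       - tau_hat nt (Yobs Y1 Y0 Wobs) Wobs theta Wobs = 0 by rewrite h subrr.
    rewrite hd => /eqP; rewrite !mulf_eq0 (gt_eqF c0) (gt_eqF mp) /= subr_eq0.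
    by move/eqP.
  move=> ht; apply/eqP; rewrite -subr_eq0; apply/eqP; by rewrite hd ht subrr mulr0.
set N := #|Wa|.
have N0 : (0 < N)%N by apply/card_gt0P; exists Wobs.
set s0 := [seq theta_b_ext Y1 Y0 Wobs w | w <- enum Wa].
set s := sort (fun x y : \bar R => (x <= y)%E) s0.
set x := alpha * N%:R.
have x0 : 0 <= x by rewrite mulr_ge0 // ltW.
have fx0 : (0 <= Num.floor x)%R by rewrite floor_ge0.
set k := `|Num.floor x|%N.
have hkx : (k%:R <= x).
  have := floor_le x; by rewrite -{1}(gez0_abs fx0).
have hk : (k < size s)%N.
  rewrite size_sort size_map -cardE -(ltr_nat R); apply: (le_lt_trans hkx).
  by rewrite /x gtr_pMl // ltr0n.
have hsorted : sorted (fun x y : \bar R => (x <= y)%E) s.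
  apply: sort_sorted; exact: le_total.
have hp : perm_eq s s0 by rewrite /s perm_sort.
have hkey1 : forall theta w, w \in Wa ->
   (tau_hat nt (Yobs Y1 Y0 Wobs) Wobs theta Wobs <= tau_hat nt (Yobs Y1 Y0 Wobs) Wobs theta w)
   = (theta_b_ext Y1 Y0 Wobs w <= theta%:E)%E.
  move=> theta w hw; case: (eqVneq w Wobs) => [->|hne].
    by rewrite lexx /theta_b_ext eqxx leNye.
  rewrite /theta_b_ext (negbTE hne) lee_fin.
  have [hd mp] := hdiff w hw hne theta.
  move: hd; move: (tau_hat _ _ _ _ w) (tau_hat _ _ _ _ Wobs) => a b hab.
  by rewrite -[b <= a]subr_ge0 hab pmulr_rge0 ?mulr_gt0 // subr_ge0.
have hkey : forall theta, (pval nt (Yobs Y1 Y0 Wobs) Wobs Wa theta <= alpha)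
   = (theta%:E < nth -oo%E s k)%E.
  move=> theta; rewrite -sorted_count // (permP hp) count_map.
  rewrite /pval ler_pdivrMr ?ltr0n //.
  rewrite (_ : #|_| = #|[set w in Wa | preim (theta_b_ext Y1 Y0 Wobs) (fun x => (x <= theta%:E)%E) w]|); last first.
    apply: eq_card => w; rewrite !inE; case hw: (w \in Wa) => //=; exact: hkey1.
  rewrite card_count -/x.
  set cn := seq.count _ _.
  rewrite -[cn%:R]/((cn%:Z)%:~R) -floor_ge_int -{1}(gez0_abs fx0) lez_nat.
  by [].
have -> : theta_order Y1 Y0 Wobs Wa k = nth -oo%E s k by [].
rewrite /theta_l.
have -> : [set theta : R | pval nt (Yobs Y1 Y0 Wobs) Wobs Wa theta <= alpha]%classic
   = [set theta : R | (theta%:E < nth -oo%E s k)%E]%classic.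
  apply/funext => theta /=; by rewrite hkey.
apply: sup_lt.
have : nth -oo%E s k \in s0 by rewrite -(perm_mem hp) mem_nth.
case/mapP => w _ ->; rewrite /theta_b_ext; by case: ifP.
Qed.
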